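(* The measure $E_2$ is not monogamous. Explicitly: let $\mathcal H^A=\mathbb C^3$, $\mathcal H^B=\mathbb C^4$, $\mathcal H^C=\mathbb C^2$, and let real numbers $a_0,a_1,a_2,a_0',a_1',a_2'\ge 0$ satisfy $a_0^2=a_0'^2\ge \tfrac12$, $a_0>a_1\ge a_2$, $a_0'>a_1'\ge a_2'$, $\sum_i a_i^2=\sum_i a_i'^2=1$, and $a_1'a_2\neq a_1a_2'$. Put $$|\psi_0\rangle^{AB}=a_0|0\rangle|0\rangle+a_1|1\rangle|1\rangle+a_2|2\rangle|2\rangle,\qquad |\psi_1\rangle^{AB}=a_0'|0\rangle|3\rangle+a_1'|1\rangle|2\rangle+a_2'|2\rangle|1\rangle,$$ $$|\Phi\rangle^{ABC}=\tfrac{1}{\sqrt2}\big(|\psi_0\rangle^{AB}|0\rangle^C+|\psi_1\rangle^{AB}|1\rangle^C\big),$$ and let $\rho^{AB}=\mathrm{tr}_C|\Phi\rangle\langle\Phi|$, $\rho^{AC}=\mathrm{tr}_B|\Phi\rangle\langle\Phi|$. Then $E_2(|\Phi\rangle^{A|BC})=E_2(\rho^{AB})=1-a_0^2$, while $E_2(\rho^{AC})>0$ (indeed $\rho^{AC}$ has a non-positive partial transpose).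
   Context: For a bipartite pure state $|\psi\rangle\in\mathcal H^{X}\otimes\mathcal H^{Y}$ with Schmidt decomposition $|\psi\rangle=\sum_{j=1}^r\lambda_j|e_j\rangle|f_j\rangle$, $\lambda_1\ge\lambda_2\ge\dots\ge\lambda_r>0$, the partial-norm of entanglement is $E_2(|\psi\rangle)=\sum_{i\ge2}\lambda_i^2=1-\lambda_1^2=1-\|\rho^X\|$, where $\rho^X=\mathrm{tr}_Y|\psi\rangle\langle\psi|$ and $\|\cdot\|$ is the operator norm. For a mixed bipartite state $\rho$, $E_2(\rho)=\min\sum_j p_jE_2(|\psi_j\rangle)$, the minimum over all pure-state decompositions $\rho=\sum_jp_j|\psi_j\rangle\langle\psi_j|$ (convex-roof extension). For a tripartite state, $E(A|BC)$ denotes the measure of the state with respect to the bipartition $A$ versus $BC$, and $E(AB)$, $E(AC)$ denote the measure of the reduced states $\rho^{AB}=\mathrm{tr}_C\rho^{ABC}$, $\rho^{AC}=\mathrm{tr}_B\rho^{ABC}$. A bipartite entanglement measure $E$ is called monogamous if for every tripartite state $\rho^{ABC}$ satisfying the disentangling condition $E(A|BC)=E(AB)$ one has $E(AC)=0$. *)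

(* Defs.v *)
From HB Require Import structures.
From mathcomp Require Import all_boot all_order all_algebra.
From mathcomp Require Import boolp classical_sets reals.
From mathcomp Require Import complex.
Set Implicit Arguments. Unset Strict Implicit. Unset Printing Implicit Defensive.
Import Order.TTheory GRing.Theory Num.Theory.
Local Open Scope ring_scope.
Local Open Scope complex_scope.
Local Open Scope classical_set_scope.

Section QuantumDefs.
Variable R : realType.
Local Notation C := R[i].

Definition cabs2 (z : C) : R := complex.Re z ^+ 2 + complex.Im z ^+ 2.

Definition vnorm (T : finType) (v : T -> C) : R :=
  Num.sqrt (\sum_(x : T) cabs2 (v x)).

Definition apply_op (T : finType) (M : T -> T -> C) (v : T -> C) : T -> C :=
  fun x => \sum_(y : T) M x y * v y.

Definition opnorm (T : finType) (M : T -> T -> C) : R :=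
  sup [set r : R | exists v : T -> C, vnorm v = 1 /\ r = vnorm (apply_op M v)].

(* positive semidefinite: <v, M v> is real and >= 0 for all v *)
Definition psd (T : finType) (M : T -> T -> C) : Prop :=
  forall v : T -> C, 0 <= \sum_(x : T) \sum_(y : T) (v x)^* * M x y * v y.

Definition density (T : finType) (M : T -> T -> C) : Prop :=
  psd M /\ \sum_(x : T) M x x = 1.

Definition proj (T : finType) (psi : T -> C) : T -> T -> C :=
  fun x y => psi x * (psi y)^*.

Definition redX (I J : finType) (psi : I * J -> C) : I -> I -> C :=
  fun i i' => \sum_(j : J) psi (i, j) * (psi (i', j))^*.

Definition E2pure (I J : finType) (psi : I * J -> C) : R :=
  1 - opnorm (redX psi).

Definition pure_decomp (T : finType) (rho : T -> T -> C)
    (s : seq (R * (T -> C))) : Prop :=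
  (forall k, k \in s -> 0 <= k.1) /\
  \sum_(k <- s) k.1 = 1 /\
  (forall k, k \in s -> vnorm k.2 = 1) /\
  (forall x y, rho x y = \sum_(k <- s) (k.1)%:C * proj k.2 x y).

Definition E2 (I J : finType) (rho : I * J -> I * J -> C) : R :=
  inf [set e : R | exists s, pure_decomp rho s /\
                     e = \sum_(k <- s) k.1 * E2pure k.2].

Definition trC (I J K : finType) (rho : I * (J * K) -> I * (J * K) -> C)
  : I * J -> I * J -> C :=
  fun x y => \sum_(k : K) rho (x.1, (x.2, k)) (y.1, (y.2, k)).

Definition trB (I J K : finType) (rho : I * (J * K) -> I * (J * K) -> C)
  : I * K -> I * K -> C :=
  fun x y => \sum_(j : J) rho (x.1, (j, x.2)) (y.1, (j, y.2)).

Definition ptrans2 (I K : finType) (rho : I * K -> I * K -> C)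
  : I * K -> I * K -> C :=
  fun x y => rho (x.1, y.2) (y.1, x.2).

End QuantumDefs.

Definition bimeasure (R : realType) :=
  forall I J : finType, (I * J -> I * J -> R[i]) -> R.

Definition E2m (R : realType) : bimeasure R := fun I J rho => @E2 R I J rho.

Definition monogamous (R : realType) (E : bimeasure R) : Prop :=
  forall (I J K : finType) (rho : I * (J * K) -> I * (J * K) -> R[i]),
    density rho ->
    E I (J * K)%type rho = E I J (trC rho) -> E I K (trB rho) = 0.

Definition coef3 (R : realType) (x0 x1 x2 : R) (i : 'I_3) : R :=
  match val i with 0 => x0 | 1 => x1 | _ => x2 end.

Definition psi0 (R : realType) (a0 a1 a2 : R) (i : 'I_3) (j : 'I_4) : R[i] :=
  if val i == val j then (coef3 a0 a1 a2 i)%:C else 0.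

(* |psi_1> = a0'|03> + a1'|12> + a2'|21> *)
Definition psi1 (R : realType) (b0 b1 b2 : R) (i : 'I_3) (j : 'I_4) : R[i] :=
  if val j == (3 - val i)%N then (coef3 b0 b1 b2 i)%:C else 0.

Definition Phi (R : realType) (a0 a1 a2 b0 b1 b2 : R)
  (x : 'I_3 * ('I_4 * 'I_2)) : R[i] :=
  (Num.sqrt (2 : R))^-1%:C *
  (if val x.2.2 == 0%N then psi0 a0 a1 a2 x.1 x.2.1
   else psi1 b0 b1 b2 x.1 x.2.1).

(* Main.v *)
Require Import Defs.
From HB Require Import structures.
From mathcomp Require Import all_boot all_order all_algebra.
From mathcomp Require Import boolp classical_sets reals.
From mathcomp Require Import complex.
Import Order.TTheory GRing.Theory Num.Theory.
Local Open Scope ring_scope.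
Local Open Scope complex_scope.

From mathcomp Require Import ring lra.

Module Helpers.
Set Implicit Arguments. Unset Strict Implicit. Unset Printing Implicit Defensive.

Ltac csplit := apply/eqP; rewrite eq_complex /=; apply/andP; split; apply/eqP.

Section G.
Local Open Scope complex_scope.
Local Open Scope classical_set_scope.
Local Open Scope ring_scope.
Variable R : realType.
Local Notation C := R[i].


Lemma realC_mul (a b : R) : (a%:C * (b%:C * (b%:C)^*)) = (a * b^+2)%:C :> C.
Proof. csplit; ring. Qed.

Lemma conjR (a : R) : (a%:C)^* = a%:C :> C.
Proof. csplit; ring. Qed.

Lemma RCM (a b : R) : (a * b)%:C = a%:C * b%:C :> C.
Proof. by csplit; ring. Qed.

Lemma RCD (a b : R) : (a + b)%:C = a%:C + b%:C :> C.
Proof. by csplit; ring. Qed.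

Lemma cabs2_ge0 (z : C) : 0 <= cabs2 z.
Proof. by rewrite /cabs2 addr_ge0 // sqr_ge0. Qed.

Lemma cabs2C (z : C) : (cabs2 z)%:C = z * z^*.
Proof. case: z => a b; rewrite /cabs2 /=; simpc; apply/eqP; rewrite eq_complex /=.
apply/andP; split; apply/eqP; ring. Qed.

Lemma cabs2M (z w : C) : cabs2 (z * w) = cabs2 z * cabs2 w.
Proof. case: z => a b; case: w => c d; rewrite /cabs2 /=; ring. Qed.

Lemma cabs2J (z : C) : cabs2 (z^*) = cabs2 z.
Proof. case: z => a b; rewrite /cabs2 /=; ring. Qed.

Lemma cabs2N (z : C) : cabs2 (- z) = cabs2 z.
Proof. by case: z => a b; rewrite /cabs2 /= !sqrrN. Qed.

Lemma cabs2_real (k : R) : cabs2 k%:C = k ^+ 2.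
Proof. by rewrite /cabs2 /= expr0n /= addr0. Qed.

Lemma cabs2_eq0 (z : C) : cabs2 z = 0 -> z = 0.
Proof.
case: z => a b; rewrite /cabs2 /= => H.
have Ha : a ^+ 2 = 0 by apply/eqP; rewrite eq_le sqr_ge0 andbT -(lerD2r (b ^+ 2)) H add0r sqr_ge0.
have Hb : b ^+ 2 = 0 by move: H; rewrite Ha add0r.
by move/eqP: Ha; rewrite sqrf_eq0 => /eqP ->; move/eqP: Hb; rewrite sqrf_eq0 => /eqP ->.
Qed.

Lemma sum_cabs2_ge0 (T : finType) (v : T -> C) : 0 <= \sum_x cabs2 (v x).
Proof. by apply: sumr_ge0 => x _; apply: cabs2_ge0. Qed.

Lemma vnorm1 (T : finType) (v : T -> C) : vnorm v = 1 <-> \sum_x cabs2 (v x) = 1.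
Proof.
rewrite /vnorm; split => [H|->]; last by rewrite sqrtr1.
by rewrite -[LHS]sqr_sqrtr ?sum_cabs2_ge0 // H expr1n.
Qed.

Lemma vnorm_le (T : finType) (v : T -> C) (c : R) : 0 <= c ->
  \sum_x cabs2 (v x) <= c ^+ 2 -> vnorm v <= c.
Proof.
move=> c0 H; rewrite /vnorm -(ger0_norm c0) -sqrtr_sqr.
by rewrite ler_sqrt // sqr_ge0.
Qed.

Lemma vnorm_eq (T : finType) (v : T -> C) (c : R) : 0 <= c ->
  \sum_x cabs2 (v x) = c ^+ 2 -> vnorm v = c.
Proof. by move=> c0 H; rewrite /vnorm H sqrtr_sqr ger0_norm. Qed.

Lemma opnorm_le (T : finType) (M : T -> T -> C) (c : R) :
  (exists v : T -> C, vnorm v = 1) ->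
  (forall v, vnorm v = 1 -> vnorm (apply_op M v) <= c) -> opnorm M <= c.
Proof.
move=> [v0 Hv0] H; rewrite /opnorm; apply: ge_sup.
  by exists (vnorm (apply_op M v0)); exists v0.
by move=> r [v [Hv ->]]; apply: H.
Qed.

Lemma opnorm_ge (T : finType) (M : T -> T -> C) (c : R) (v : T -> C) :
  (forall v, vnorm v = 1 -> vnorm (apply_op M v) <= c) ->
  vnorm v = 1 -> vnorm (apply_op M v) <= opnorm M.
Proof.
move=> H Hv; rewrite /opnorm; apply: ub_le_sup; last by exists v.
by exists c => r [w [Hw ->]]; apply: H.
Qed.

Lemma opnorm_eq (T : finType) (M : T -> T -> C) (c : R) (v : T -> C) :
  (forall v, vnorm v = 1 -> vnorm (apply_op M v) <= c) ->
  vnorm v = 1 -> vnorm (apply_op M v) = c -> opnorm M = c.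
Proof.
move=> H Hv Hc; apply/eqP; rewrite eq_le opnorm_le //; last by exists v.
by rewrite -Hc; apply: (opnorm_ge H).
Qed.

Lemma sum_seq_eq0 (X : eqType) (s : seq X) (g : X -> R) :
  (forall k, k \in s -> 0 <= g k) -> \sum_(k <- s) g k = 0 -> forall k, k \in s -> g k = 0.
Proof.
elim: s => [|a s IH] //= Hg; rewrite big_cons => H k.
have Hs : 0 <= \sum_(k <- s) g k.
  by rewrite big_seq; apply: sumr_ge0 => i Hi; apply: Hg; rewrite inE Hi orbT.
have Ha : g a = 0.
  by apply/eqP; rewrite eq_le Hg ?inE ?eqxx // andbT -H lerDl.
rewrite inE => /orP [/eqP -> //|Hk]; apply: IH => //.
  by move=> i Hi; apply: Hg; rewrite inE Hi orbT.
by move: H; rewrite Ha add0r.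
Qed.

Section Decomp.
Variable T : finType.
Implicit Types (rho : T -> T -> C) (s : seq (R * (T -> C))).

Lemma decomp_entry rho s x y : pure_decomp rho s ->
  rho x y = \sum_(k <- s) (k.1)%:C * (k.2 x * (k.2 y)^*).
Proof. by case=> _ [_ [_ H]]; rewrite H. Qed.

Lemma decomp_diag rho s x : pure_decomp rho s ->
  rho x x = (\sum_(k <- s) k.1 * cabs2 (k.2 x))%:C.
Proof.
move=> D; rewrite (decomp_entry x x D) rmorph_sum; apply: eq_bigr => k _.
by rewrite -cabs2C -rmorphM.
Qed.

Lemma decomp_form2 rho s x y (c d : C) : pure_decomp rho s ->
  (\sum_(k <- s) k.1 * cabs2 (c * k.2 x + d * k.2 y))%:C =
  c * c^* * rho x x + c * d^* * rho x y + d * c^* * rho y x + d * d^* * rho y y.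
Proof.
move=> D; rewrite !(decomp_entry _ _ D) !mulr_sumr -!big_split rmorph_sum /=.
apply: eq_bigr => k _; rewrite -[RHS]/(_ + _ + _ + _).
transitivity ((k.1)%:C * (cabs2 (c * k.2 x + d * k.2 y))%:C); first by rewrite rmorphM.
rewrite cabs2C rmorphD !rmorphM /=; ring.
Qed.

Lemma decomp_pos_zero rho s (g : R * (T -> C) -> R) :
  pure_decomp rho s -> (forall k, 0 <= g k) ->
  \sum_(k <- s) k.1 * g k = 0 -> forall k, k \in s -> 0 < k.1 -> g k = 0.
Proof.
move=> [P0 _] Hg Hs k ks kp.
have := @sum_seq_eq0 _ s (fun k => k.1 * g k).
have H0 : forall k, k \in s -> 0 <= k.1 * g k by move=> i Hi; rewrite mulr_ge0 ?P0.
move=> /(_ H0 Hs k ks) /eqP; rewrite mulf_eq0 => /orP [/eqP H|/eqP //].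
by move: kp; rewrite H ltxx.
Qed.

End Decomp.

Lemma sum_const_pos (T : finType) (rho : T -> T -> C) s (g : R * (T -> C) -> R) e :
  pure_decomp rho s -> (forall k, k \in s -> 0 < k.1 -> g k = e) ->
  \sum_(k <- s) k.1 * g k = e.
Proof.
move=> [P0 [P1 _]] Hg; transitivity (\sum_(k <- s) k.1 * e).
  rewrite big_seq [RHS]big_seq; apply: eq_bigr => k ks.
  have := P0 k ks; rewrite le_eqVlt => /orP [/eqP <-|kp]; first by rewrite !mul0r.
  by rewrite Hg.
by rewrite -mulr_suml P1 mul1r.
Qed.

Lemma E2_eq (I J : finType) (rho : I * J -> I * J -> C) e :
  (exists s, pure_decomp rho s) ->
  (forall s, pure_decomp rho s -> forall k, k \in s -> 0 < k.1 -> E2pure k.2 = e) ->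
  E2 rho = e.
Proof.
move=> [s0 D0] H; rewrite /E2.
have -> : [set e0 : R | exists s, pure_decomp rho s /\
     e0 = \sum_(k <- s) k.1 * E2pure k.2] = [set e].
  apply/seteqP; split => y /=.
    by move=> [s [D ->]]; apply: (sum_const_pos D); apply: H.
  move=> ->; exists s0; split => //; symmetry.
  by apply: (sum_const_pos D0); apply: H.
exact: inf1.
Qed.

Lemma E2_ge (I J : finType) (rho : I * J -> I * J -> C) c :
  (exists s, pure_decomp rho s) ->
  (forall s, pure_decomp rho s -> c <= \sum_(k <- s) k.1 * E2pure k.2) ->
  c <= E2 rho.
Proof.
move=> [s0 D0] H; rewrite /E2; apply: lb_le_inf.
  by exists (\sum_(k <- s0) k.1 * E2pure k.2); exists s0.
by move=> y [s [D ->]]; apply: H.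
Qed.

Lemma decomp_exists (T : finType) (rho : T -> T -> C) (l : seq (T -> C)) :
  \sum_(f <- l) \sum_x cabs2 (f x) = 1 ->
  (forall x y, rho x y = \sum_(f <- l) f x * (f y)^*) ->
  exists s, pure_decomp rho s.
Proof.
move=> Hl Hr.
pose N (f : T -> C) := \sum_x cabs2 (f x).
have N0 f : 0 <= N f by apply: sum_cabs2_ge0.
have Nz f : N f = 0 -> forall x, f x = 0.
  move=> H x; apply: cabs2_eq0; move: H; rewrite /N => H.
  by apply: (psumr_eq0P _ H) => // y _; apply: cabs2_ge0.
pose sq f := ((Num.sqrt (N f))^-1)%:C.
have sqK f : N f != 0 -> (N f)%:C * (sq f * (sq f)^*) = 1.
  move=> Hf; rewrite /sq realC_mul exprVn sqr_sqrtr // mulfV //.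
exists [seq (N f, fun x => sq f * f x) | f <- [seq f <- l | N f != 0]].
rewrite /pure_decomp; split; [|split; [|split]].
- by move=> k /mapP [f _ ->]; apply: N0.
- rewrite big_map big_filter -Hl [RHS](bigID (fun f => N f != 0)) /=.
  rewrite [X in _ = _ + X]big1 ?addr0 // => f; rewrite negbK => /eqP //.
- move=> k /mapP [f]; rewrite mem_filter => /andP [Hf _] -> /=.
  apply/vnorm1; transitivity (\sum_x (cabs2 (sq f) * cabs2 (f x))).
    by apply: eq_bigr => x _; rewrite cabs2M.
  rewrite -mulr_sumr /sq cabs2_real exprVn sqr_sqrtr // mulVf //.
- move=> x y; rewrite Hr big_map big_filter (bigID (fun f => N f != 0)) /=.
  rewrite [X in _ + X]big1 ?addr0; last first.
    by move=> f; rewrite negbK => /eqP H; rewrite (Nz f H x) mul0r.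
  apply: eq_bigr => f Hf /=.
  transitivity (((N f)%:C * (sq f * (sq f)^*)) * (f x * (f y)^*)).
    by rewrite sqK // mul1r.
  rewrite /proj /= rmorphM; ring.
Qed.

Lemma pure_E2pure (I J : finType) (phi : I * J -> C) x0 s k :
  phi x0 != 0 -> vnorm phi = 1 -> pure_decomp (proj phi) s -> k \in s -> 0 < k.1 ->
  E2pure k.2 = E2pure phi.
Proof.
move=> Hx0 Hn D ks kp.
have Hx : forall x, phi x0 * k.2 x = phi x * k.2 x0.
  move=> x; have := decomp_form2 x x0 (phi x0) (- phi x) D.
  rewrite /proj.
  have -> : phi x0 * (phi x0)^* * (phi x * (phi x)^*) +
    phi x0 * (- phi x)^* * (phi x * (phi x0)^*) +
    - phi x * (phi x0)^* * (phi x0 * (phi x)^*) +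
    - phi x * (- phi x)^* * (phi x0 * (phi x0)^*) = 0%:C.
    rewrite rmorphN /=; ring.
  move/complexI => H0.
  have := decomp_pos_zero D _ H0 ks kp.
  move=> /(_ (fun _ => cabs2_ge0 _)) /cabs2_eq0 /eqP.
  by rewrite mulNr subr_eq0 => /eqP.
set lam := k.2 x0 / phi x0.
have Hk : forall x, k.2 x = lam * phi x.
  move=> x; apply: (mulfI Hx0); rewrite Hx /lam; field.
  by rewrite Hx0.
have Hl : cabs2 lam = 1.
  case: D => _ [_ [Hv _]]; have := Hv k ks; move/vnorm1.
  have := Hn; move/vnorm1 => Hp.
  under eq_bigr do rewrite Hk cabs2M.
  by rewrite -mulr_sumr Hp mulr1.
rewrite /E2pure; congr (1 - opnorm _).
apply/funext => i; apply/funext => i'; rewrite /redX; apply: eq_bigr => j _.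
rewrite !Hk rmorphM.
transitivity ((lam * lam^*) * (phi (i, j) * (phi (i', j))^*)); first by ring.
by rewrite -cabs2C Hl mul1r.
Qed.

Lemma E2_proj (I J : finType) (phi : I * J -> C) x0 :
  phi x0 != 0 -> vnorm phi = 1 -> E2 (proj phi) = E2pure phi.
Proof.
move=> Hx0 Hn; apply: E2_eq; last by move=> s D k ks kp; apply: (pure_E2pure Hx0 Hn D).
exists [:: (1, phi)]; rewrite /pure_decomp; split; [|split; [|split]].
- by move=> k; rewrite inE => /eqP -> /=.
- by rewrite big_seq1.
- by move=> k; rewrite inE => /eqP -> /=.
- by move=> x y; rewrite big_seq1 /= mul1r.
Qed.


Lemma CS2 (x1 x2 y1 y2 : C) :
  cabs2 (x1 * y1 + x2 * y2) <= (cabs2 x1 + cabs2 x2) * (cabs2 y1 + cabs2 y2).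
Proof.
have -> : (cabs2 x1 + cabs2 x2) * (cabs2 y1 + cabs2 y2) =
  cabs2 (x1 * y1 + x2 * y2) + cabs2 (x1 * y2^* - x2 * y1^*).
  case: x1 => p1 q1; case: x2 => p2 q2; case: y1 => r1 s1; case: y2 => r2 s2.
  rewrite /cabs2 /=; ring.
by rewrite lerDl cabs2_ge0.
Qed.

Lemma CS3 (x1 x2 x3 y1 y2 y3 : C) :
  cabs2 (x1 * y1 + x2 * y2 + x3 * y3) <=
  (cabs2 x1 + cabs2 x2 + cabs2 x3) * (cabs2 y1 + cabs2 y2 + cabs2 y3).
Proof.
have -> : (cabs2 x1 + cabs2 x2 + cabs2 x3) * (cabs2 y1 + cabs2 y2 + cabs2 y3) =
  cabs2 (x1 * y1 + x2 * y2 + x3 * y3) + (cabs2 (x1 * y2^* - x2 * y1^*) +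
  cabs2 (x1 * y3^* - x3 * y1^*) + cabs2 (x2 * y3^* - x3 * y2^*)).
  case: x1 => p1 q1; case: x2 => p2 q2; case: x3 => p3 q3.
  case: y1 => r1 s1; case: y2 => r2 s2; case: y3 => r3 s3.
  rewrite /cabs2 /=; ring.
by rewrite lerDl; apply: addr_ge0; [apply: addr_ge0|]; apply: cabs2_ge0.
Qed.

Lemma decomp_zero_diag (T : finType) (rho : T -> T -> C) s k x :
  pure_decomp rho s -> k \in s -> 0 < k.1 -> rho x x = 0 -> k.2 x = 0.
Proof.
move=> D ks kp H; apply: cabs2_eq0.
apply: (decomp_pos_zero (g := fun k => cabs2 (k.2 x)) D) => //.
  by move=> ?; apply: cabs2_ge0.
by apply: complexI; rewrite -(decomp_diag x D) H.
Qed.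

Lemma decomp_zero_form (T : finType) (rho : T -> T -> C) s k x y (c d : C) :
  pure_decomp rho s -> k \in s -> 0 < k.1 ->
  c * c^* * rho x x + c * d^* * rho x y + d * c^* * rho y x + d * d^* * rho y y = 0 ->
  c * k.2 x + d * k.2 y = 0.
Proof.
move=> D ks kp H; apply: cabs2_eq0.
apply: (decomp_pos_zero (g := fun k => cabs2 (c * k.2 x + d * k.2 y)) D) => //.
  by move=> ?; apply: cabs2_ge0.
by apply: complexI; rewrite (decomp_form2 x y c d D) H.
Qed.


Definition rr (z0 z1 w0 w1 : C) := z0 * w0^* + z1 * w1^*.

Lemma frob_id (z00 z01 z10 z11 z20 z21 : C) :
  cabs2 (rr z00 z01 z00 z01) + cabs2 (rr z00 z01 z10 z11) + cabs2 (rr z00 z01 z20 z21) +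
  (cabs2 (rr z10 z11 z00 z01) + cabs2 (rr z10 z11 z10 z11) + cabs2 (rr z10 z11 z20 z21)) +
  (cabs2 (rr z20 z21 z00 z01) + cabs2 (rr z20 z21 z10 z11) + cabs2 (rr z20 z21 z20 z21)) +
  2 * (cabs2 (z00 * z11 - z01 * z10) + cabs2 (z00 * z21 - z01 * z20) +
       cabs2 (z10 * z21 - z11 * z20)) =
  (cabs2 z00 + cabs2 z01 + cabs2 z10 + cabs2 z11 + cabs2 z20 + cabs2 z21) ^+ 2.
Proof.
case: z00 => p1 q1; case: z01 => p2 q2; case: z10 => p3 q3.
case: z11 => p4 q4; case: z20 => p5 q5; case: z21 => p6 q6.
rewrite /rr /cabs2 /=; ring.
Qed.


Definition nc (z : C) : R := Num.sqrt (cabs2 z).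

Lemma nc_ge0 z : 0 <= nc z.
Proof. exact: sqrtr_ge0. Qed.

Lemma nc_sqr z : nc z ^+ 2 = cabs2 z.
Proof. by rewrite /nc sqr_sqrtr // cabs2_ge0. Qed.

Lemma ncM z w : nc (z * w) = nc z * nc w.
Proof. by rewrite /nc cabs2M sqrtrM // cabs2_ge0. Qed.

Lemma ncJ z : nc (z^*) = nc z.
Proof. by rewrite /nc cabs2J. Qed.

Lemma ncN z : nc (- z) = nc z.
Proof. by rewrite /nc; case: z => a b; rewrite /cabs2 /= !sqrrN. Qed.

Lemma nc_norm z : `|z| = (nc z)%:C.
Proof. by rewrite normc_def. Qed.

Lemma ncD z w : nc (z + w) <= nc z + nc w.
Proof.
have := ler_normD z w; rewrite !nc_norm -rmorphD /=.
by rewrite lecR.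
Qed.

Lemma Re_ge_nc z : - nc z <= complex.Re z.
Proof.
case: z => a b; rewrite /nc /cabs2 /=.
have h : `|a| <= Num.sqrt (a ^+ 2 + b ^+ 2).
  by rewrite -sqrtr_sqr ler_sqrt ?addr_ge0 ?sqr_ge0 // lerDl sqr_ge0.
have := ler_norm (- a); rewrite normrN; lra.
Qed.


Lemma pt_bound (z1 z2 w1 w2 : C) (c d : R) :
  - (2 * `|c * d| * nc (z1 * z2 - w1 * w2)) <=
  c ^+ 2 * cabs2 z1 + d ^+ 2 * cabs2 z2 + 2 * (c * d) * complex.Re (w1 * w2^*).
Proof.
set u := `|c * d|.
have u0 : 0 <= u by apply: normr_ge0.
have F1 : 2 * u * (nc z1 * nc z2) <= c ^+ 2 * cabs2 z1 + d ^+ 2 * cabs2 z2.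
  rewrite -!nc_sqr /u normrM.
  have := sqr_ge0 (`|c| * nc z1 - `|d| * nc z2).
  have E : (`|c| * nc z1 - `|d| * nc z2) ^+ 2 = `|c| ^+ 2 * nc z1 ^+ 2 +
     `|d| ^+ 2 * nc z2 ^+ 2 - 2 * (`|c| * `|d|) * (nc z1 * nc z2) by ring.
  rewrite E -!normrX (ger0_norm (sqr_ge0 c)) (ger0_norm (sqr_ge0 d)); lra.
have F2 : - (u * (nc w1 * nc w2)) <= c * d * complex.Re (w1 * w2^*).
  have h1 := Re_ge_nc (w1 * w2^*).
  have h2 := Re_ge_nc (- (w1 * w2^*)).
  rewrite ncN in h2; rewrite ncM ncJ in h1 h2.
  have h3 : complex.Re (- (w1 * w2^*)) = - complex.Re (w1 * w2^*).
    by case: (w1 * w2^*) => a b.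
  rewrite h3 in h2.
  case: (lerP 0 (c * d)) => h; [rewrite /u ger0_norm // | rewrite /u ltr0_norm //]; nra.
have F3 : nc w1 * nc w2 <= nc z1 * nc z2 + nc (z1 * z2 - w1 * w2).
  rewrite -!ncM; have := ncD (z1 * z2) (- (z1 * z2 - w1 * w2)); rewrite ncN.
  have -> : z1 * z2 + - (z1 * z2 - w1 * w2) = w1 * w2 by ring.
  lra.
have F4 := ler_wpM2l u0 F3.
lra.
Qed.

Lemma jensen (X : eqType) (s : seq (R * X)) (f : R * X -> R) :
  (forall k, k \in s -> 0 <= k.1) -> \sum_(k <- s) k.1 = 1 ->
  (\sum_(k <- s) k.1 * f k) ^+ 2 <= \sum_(k <- s) k.1 * f k ^+ 2.
Proof.
move=> P0 P1; set m := \sum_(k <- s) k.1 * f k.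
have H : 0 <= \sum_(k <- s) k.1 * (f k - m) ^+ 2.
  by rewrite big_seq; apply: sumr_ge0 => k ks; rewrite mulr_ge0 ?P0 ?sqr_ge0.
have E : \sum_(k <- s) k.1 * (f k - m) ^+ 2 =
   \sum_(k <- s) k.1 * f k ^+ 2 - 2 * m * m + m ^+ 2 * \sum_(k <- s) k.1.
  rewrite (eq_bigr (fun k => k.1 * f k ^+ 2 + (- (2 * m) * (k.1 * f k) + m ^+ 2 * k.1)));
    last by move=> k _; ring.
  rewrite !big_split /= -!mulr_sumr -/m; ring.
move: H; rewrite E P1; lra.
Qed.


Lemma sum_if (T : finType) (F : T -> C) t (c : C) :
  \sum_y F y * (if y == t then c else 0) = F t * c.
Proof.
rewrite -(@big_pred1_eq C 0 +%R _ t (fun y => F y * c)) big_mkcond.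
by apply: eq_bigr => y _; case: eqP => _; rewrite ?mulr0.
Qed.

Lemma sum_ifl (T : finType) (F : T -> C) t (c : C) :
  \sum_y (if y == t then c else 0)^* * F y = c^* * F t.
Proof.
rewrite -(@big_pred1_eq C 0 +%R _ t (fun y => c^* * F y)) big_mkcond.
by apply: eq_bigr => y _; case: eqP => _; rewrite ?rmorph0 ?mul0r.
Qed.

Lemma qform2 (T : finType) (M : T -> T -> C) x1 x2 (c d : C) :
  \sum_x \sum_y ((if x == x1 then c else 0) + (if x == x2 then d else 0))^* * M x y *
     ((if y == x1 then c else 0) + (if y == x2 then d else 0)) =
  c^* * M x1 x1 * c + c^* * M x1 x2 * d + d^* * M x2 x1 * c + d^* * M x2 x2 * d.
Proof.
set w := fun x => (if x == x1 then c else 0) + (if x == x2 then d else 0).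
transitivity (\sum_x ((if x == x1 then c else 0) + (if x == x2 then d else 0))^* *
                  (M x x1 * c + M x x2 * d)).
  apply: eq_bigr => x _.
  rewrite (eq_bigr (fun y => ((w x)^* * M x y) * (if y == x1 then c else 0) +
                             ((w x)^* * M x y) * (if y == x2 then d else 0))).
    by rewrite big_split /= !sum_if /w; ring.
  by move=> y _; rewrite mulrDr.
rewrite (eq_bigr (fun x => (if x == x1 then c else 0)^* * (M x x1 * c + M x x2 * d) +
                           (if x == x2 then d else 0)^* * (M x x1 * c + M x x2 * d))).
  by rewrite big_split /= !sum_ifl; ring.
by move=> x _; rewrite rmorphD mulrDl.
Qed.

Lemma ReC (z : C) : (2 * complex.Re z)%:C = z + z^*.
Proof. by case: z => a b; csplit; ring. Qed.

Lemma decomp_lin (T : finType) (rho : T -> T -> C) s x1 x2 y1 y2 (c d : R) :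
  pure_decomp rho s ->
  (\sum_(k <- s) k.1 * (c ^+ 2 * cabs2 (k.2 x1) + d ^+ 2 * cabs2 (k.2 x2) +
      2 * (c * d) * complex.Re (k.2 y1 * (k.2 y2)^*)))%:C =
  (c ^+ 2)%:C * rho x1 x1 + (d ^+ 2)%:C * rho x2 x2 + (c * d)%:C * (rho y1 y2 + rho y2 y1).
Proof.
move=> D; rewrite !(decomp_entry _ _ D) mulrDr !mulr_sumr -!big_split rmorph_sum /=.
apply: eq_bigr => k _.
move: (k.2 x1) (k.2 x2) (k.2 y1) (k.2 y2) (k.1) => [p1 q1] [p2 q2] [p3 q3] [p4 q4] r.
rewrite /cabs2 /=; csplit; ring.
Qed.


Lemma psd_qform2 (T : finType) (M : T -> T -> C) x1 x2 (c d : C) : psd M ->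
  0 <= c^* * M x1 x1 * c + c^* * M x1 x2 * d + d^* * M x2 x1 * c + d^* * M x2 x2 * d.
Proof. by move=> H; rewrite -qform2; apply: H. Qed.


Lemma psd_proj (T : finType) (phi : T -> C) : psd (proj phi).
Proof.
move=> v; rewrite /proj.
have -> : \sum_x \sum_y (v x)^* * (phi x * (phi y)^*) * v y =
  (\sum_x (v x)^* * phi x) * (\sum_x (v x)^* * phi x)^*.
  rewrite mulr_suml; apply: eq_bigr => x _.
  rewrite rmorph_sum mulr_sumr; apply: eq_bigr => y _.
  by rewrite rmorphM /= conjCK; ring.
by rewrite -cabs2C lecR cabs2_ge0.
Qed.

Lemma density_proj (T : finType) (phi : T -> C) : vnorm phi = 1 -> density (proj phi).
Proof.
move=> /vnorm1 H; split; first exact: psd_proj.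
rewrite /proj -(rmorph1 (real_complex R)) -H rmorph_sum; apply: eq_bigr => x _.
by rewrite -cabs2C.
Qed.

End G.

Arguments cabs2 : simpl never.

Section P.
Local Open Scope complex_scope.
Local Open Scope classical_set_scope.
Local Open Scope ring_scope.
Variable R : realType.
Local Notation C := R[i].

Lemma sum_pair (I J : finType) (F : I * J -> C) :
  \sum_x F x = \sum_i \sum_j F (i, j).
Proof. by rewrite pair_bigA; apply: eq_bigr => -[]. Qed.

Lemma sum_pairR (I J : finType) (F : I * J -> R) :
  \sum_x F x = \sum_i \sum_j F (i, j).
Proof. by rewrite pair_bigA; apply: eq_bigr => -[]. Qed.

Lemma sum_delta (T : finType) (F : T -> C) t0 :
  \sum_x (if x == t0 then F x else 0) = F t0.
Proof. by rewrite -big_mkcond big_pred1_eq. Qed.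

Lemma sum_deltaR (T : finType) (F : T -> R) t0 :
  \sum_x (if x == t0 then F x else 0) = F t0.
Proof. by rewrite -big_mkcond big_pred1_eq. Qed.

Definition evec (T : finType) (t0 : T) : T -> C := fun x => if x == t0 then 1 else 0.

Lemma evec_unit (T : finType) (t0 : T) : vnorm (evec t0) = 1.
Proof.
apply/vnorm1; rewrite -[RHS](sum_deltaR (fun _ => 1) t0); apply: eq_bigr => x _.
by rewrite /evec; case: (x == t0); rewrite ?cabs2_real ?expr1n ?expr0n //=; rewrite /cabs2 /= expr0n addr0.
Qed.

Lemma opnorm_diag (T : finType) (M : T -> T -> C) (d : T -> R) t0 :
  (forall x y, M x y = if x == y then (d x)%:C else 0) ->
  (forall x, 0 <= d x <= d t0) -> opnorm M = d t0.
Proof.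
move=> HM Hd.
have Hap : forall v x, apply_op M v x = (d x)%:C * v x.
  move=> v x; rewrite /apply_op (bigD1 x) //= HM eqxx big1 ?addr0 // => y.
  by rewrite HM eq_sym => /negbTE ->; rewrite mul0r.
have d0 : 0 <= d t0 by case/andP: (Hd t0).
apply: (@opnorm_eq _ _ _ _ (evec t0)).
- move=> v /vnorm1 Hv; apply: vnorm_le => //.
  rewrite -[X in _ <= X]mulr1 -Hv mulr_sumr; apply: ler_sum => x _.
  rewrite Hap cabs2M cabs2_real ler_wpM2r ?cabs2_ge0 //.
  by case/andP: (Hd x) => h1 h2; rewrite ler_sqr.
- exact: evec_unit.
- apply: vnorm_eq => //; rewrite -[RHS](sum_deltaR (fun _ => d t0 ^+ 2) t0).
  apply: eq_bigr => x _; rewrite Hap /evec; case: eqP => [->|_].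
    by rewrite mulr1 cabs2_real.
  by rewrite mulr0 /cabs2 /= expr0n addr0.
Qed.


Lemma opnorm_block (M : 'I_3 -> 'I_3 -> C) (blk : nat -> nat -> C) (m : R) :
  (forall x y, M x y = blk (val x) (val y)) ->
  blk 0 0 = m%:C -> blk 0 1 = 0 -> blk 0 2 = 0 -> blk 1 0 = 0 -> blk 2 0 = 0 ->
  0 <= m ->
  cabs2 (blk 1 1) + cabs2 (blk 1 2) + cabs2 (blk 2 1) + cabs2 (blk 2 2) <= m ^+ 2 ->
  opnorm M = m.
Proof.
move=> HM h00 h01 h02 h10 h20 m0 hF.
apply: (@opnorm_eq _ _ _ _ (evec ord0)).
- move=> v /vnorm1; rewrite !big_ord_recl !big_ord0 /= => Hv.
  apply: vnorm_le => //; rewrite /apply_op !big_ord_recl !big_ord0 !HM /=.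
  rewrite h00 h01 h02 h10 h20 !mul0r !addr0 !add0r.
  set v0 := v ord0; set v1 := v _; set v2 := v _.
  move: Hv; rewrite -/v0 -/v1 -/v2 => Hv.
  have c1 := CS2 (blk 1 1) (blk 1 2) v1 v2.
  have c2 := CS2 (blk 2 1) (blk 2 2) v1 v2.
  rewrite cabs2M cabs2_real.
  have g0 := cabs2_ge0 v0; have g1 := cabs2_ge0 v1; have g2 := cabs2_ge0 v2.
  have F0 : 0 <= cabs2 v1 + cabs2 v2 by lra.
  have := ler_wpM2r F0 hF.
  nra.
- exact: evec_unit.
- apply: vnorm_eq => //; rewrite /apply_op !big_ord_recl !big_ord0 !HM /evec /=.
  rewrite h00 h10 h20 !mulr0 !mul0r !addr0 mulr1 cabs2_real.
  by rewrite /cabs2 /= expr0n /= !addr0.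
Qed.

Lemma row_bound (r0 r1 r2 v0 v1 v2 : C) :
  cabs2 (r0 * v0 + (r1 * v1 + r2 * v2)) <=
  (cabs2 r0 + (cabs2 r1 + cabs2 r2)) * (cabs2 v0 + (cabs2 v1 + cabs2 v2)).
Proof.
have -> : r0 * v0 + (r1 * v1 + r2 * v2) = r0 * v0 + r1 * v1 + r2 * v2 by rewrite addrA.
have -> : cabs2 r0 + (cabs2 r1 + cabs2 r2) = cabs2 r0 + cabs2 r1 + cabs2 r2 by lra.
have -> : cabs2 v0 + (cabs2 v1 + cabs2 v2) = cabs2 v0 + cabs2 v1 + cabs2 v2 by lra.
exact: CS3.
Qed.

Lemma E2pure_32 (psi : 'I_3 * 'I_2 -> C) :
  vnorm psi = 1 ->
  cabs2 (psi (inord 1, inord 0) * psi (inord 2, inord 1) -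
         psi (inord 1, inord 1) * psi (inord 2, inord 0)) <= E2pure psi.
Proof.
move=> /vnorm1 Hn.
have e1 : (inord 1 : 'I_3) = lift ord0 ord0 by apply/val_inj; rewrite /= inordK.
have e2 : (inord 2 : 'I_3) = lift ord0 (lift ord0 ord0) by apply/val_inj; rewrite /= inordK.
have e0 : (inord 0 : 'I_2) = ord0 by apply/val_inj; rewrite /= inordK.
have e1' : (inord 1 : 'I_2) = lift ord0 ord0 by apply/val_inj; rewrite /= inordK.
rewrite e1 e2 e0 e1'.
move: Hn; rewrite sum_pairR !big_ord_recl !big_ord0 !addr0 => Hn.
pose De := cabs2 (psi (ord0, ord0) * psi (lift ord0 ord0, lift ord0 ord0) -
                  psi (ord0, lift ord0 ord0) * psi (lift ord0 ord0, ord0)) +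
  cabs2 (psi (ord0, ord0) * psi (lift ord0 (lift ord0 ord0), lift ord0 ord0) -
         psi (ord0, lift ord0 ord0) * psi (lift ord0 (lift ord0 ord0), ord0)) +
  cabs2 (psi (lift ord0 ord0, ord0) * psi (lift ord0 (lift ord0 ord0), lift ord0 ord0) -
         psi (lift ord0 ord0, lift ord0 ord0) * psi (lift ord0 (lift ord0 ord0), ord0)).
have Hf := frob_id (psi (ord0, ord0)) (psi (ord0, lift ord0 ord0))
  (psi (lift ord0 ord0, ord0)) (psi (lift ord0 ord0, lift ord0 ord0))
  (psi (lift ord0 (lift ord0 ord0), ord0)) (psi (lift ord0 (lift ord0 ord0), lift ord0 ord0)).
rewrite -/De /rr in Hf.
move: Hf; set Y := (X in _ = X ^+ 2) => Hf.
have HY : Y = 1 by rewrite /Y; lra.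
rewrite HY expr1n in Hf.
have D0 : 0 <= De by exact: addr_ge0 (addr_ge0 (cabs2_ge0 _) (cabs2_ge0 _)) (cabs2_ge0 _).
have Hop : opnorm (redX psi) <= 1 - De.
  apply: opnorm_le; first by exists (evec ord0); apply: evec_unit.
  move=> v /vnorm1; rewrite !big_ord_recl !big_ord0 !addr0 => Hv.
  have Hsq : (1 - De) ^+ 2 = 1 - 2 * De + De ^+ 2 by ring.
  have := sqr_ge0 De => Hsq0.
  have Fr0 : 0 <= 1 - 2 * De.
    move: Hf; set X := (X in X + _ = _) => Hf.
    have : 0 <= X by rewrite /X; repeat first [apply: cabs2_ge0 | apply: addr_ge0].
    lra.
  apply: vnorm_le; first lra.
  rewrite /apply_op /redX !big_ord_recl !big_ord0 !addr0.
  apply: le_trans; first (apply: lerD; [apply: row_bound | apply: lerD; apply: row_bound]).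
  rewrite Hv !mulr1; lra.
have := Hop; rewrite /E2pure /De.
have := cabs2_ge0 (psi (ord0, ord0) * psi (lift ord0 ord0, lift ord0 ord0) - psi (ord0, lift ord0 ord0) * psi (lift ord0 ord0, ord0)).
have := cabs2_ge0 (psi (ord0, ord0) * psi (lift ord0 (lift ord0 ord0), lift ord0 ord0) - psi (ord0, lift ord0 ord0) * psi (lift ord0 (lift ord0 ord0), ord0)).
lra.
Qed.

Definition cf (x0 x1 x2 : R) (i : nat) : R :=
  match i with 0 => x0 | 1 => x1 | _ => x2 end.

Section Spec.
Variables a0 a1 a2 b0 b1 b2 : R.
Definition sA (i j : nat) : R := if i == j then cf a0 a1 a2 i else 0.
Definition sB (i j : nat) : R := if j == (3 - i)%N then cf b0 b1 b2 i else 0.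
Definition phr (i j c : nat) : R := if c == 0%N then sA i j else sB i j.
Local Notation ph := (Phi a0 a1 a2 b0 b1 b2).
Definition t : R := (Num.sqrt (2:R))^-1.

Lemma Phi_val x : ph x = (t * phr (val x.1) (val x.2.1) (val x.2.2))%:C.
Proof.
case: x => i [j c]; rewrite /Phi /psi0 /psi1 /phr /sA /sB /= rmorphM.
have Hc : forall (x0 x1 x2 : R) (i : 'I_3), coef3 x0 x1 x2 i = cf x0 x1 x2 (val i) by [].
by case: ifP => _; case: ifP => _; rewrite ?Hc ?mulr0.
Qed.

Lemma t2 : t ^+ 2 = 1 / 2.
Proof. by rewrite /t exprVn sqr_sqrtr ?ler0n // div1r. Qed.

Definition rAB (i j i' j' : nat) : R :=
  1 / 2 * (phr i j 0 * phr i' j' 0 + phr i j 1 * phr i' j' 1).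

Lemma trC_val x y : trC (proj ph) x y =
  (rAB (val x.1) (val x.2) (val y.1) (val y.2))%:C.
Proof.
rewrite /trC /proj !big_ord_recl big_ord0 !Phi_val /= !conjR -!rmorphM -!rmorphD.
by rewrite /rAB -t2; congr (_%:C); ring.
Qed.

Definition rAC (i c i' c' : nat) : R :=
  1 / 2 * (phr i 0 c * phr i' 0 c' + phr i 1 c * phr i' 1 c' +
           phr i 2 c * phr i' 2 c' + phr i 3 c * phr i' 3 c').

Lemma trB_val x y : trB (proj ph) x y =
  (rAC (val x.1) (val x.2) (val y.1) (val y.2))%:C.
Proof.
rewrite /trB /proj !big_ord_recl big_ord0 !Phi_val /= !conjR -!rmorphM -!rmorphD.
by rewrite /rAC -t2; congr (_%:C); ring.
Qed.

Lemma redXPhi_val x y : redX ph x y =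
  (1 / 2 * (sA (val x) 0 * sA (val y) 0 + sA (val x) 1 * sA (val y) 1 +
   sA (val x) 2 * sA (val y) 2 + sA (val x) 3 * sA (val y) 3 +
   sB (val x) 0 * sB (val y) 0 + sB (val x) 1 * sB (val y) 1 +
   sB (val x) 2 * sB (val y) 2 + sB (val x) 3 * sB (val y) 3))%:C.
Proof.
rewrite /redX sum_pair !big_ord_recl !big_ord0 !Phi_val /= !conjR -!rmorphM -!rmorphD.
rewrite -t2 /phr /=; congr (_%:C); ring.
Qed.

Lemma vnormPhi : a0 ^+ 2 + a1 ^+ 2 + a2 ^+ 2 = 1 -> b0 ^+ 2 + b1 ^+ 2 + b2 ^+ 2 = 1 ->
  vnorm ph = 1.
Proof.
move=> Ha Hb; apply/vnorm1; rewrite sum_pairR.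
under eq_bigr do rewrite sum_pairR.
rewrite !big_ord_recl !big_ord0.
rewrite !Phi_val !cabs2_real /= /phr /sA /sB /=.
rewrite !exprMn t2; lra.
Qed.


Hypotheses (a00 : 0 <= a0) (a10 : 0 <= a1) (a20 : 0 <= a2)
  (b00 : 0 <= b0) (b10 : 0 <= b1) (b20 : 0 <= b2)
  (hab0 : a0 ^+ 2 = b0 ^+ 2) (ha0 : 1 / 2 <= a0 ^+ 2)
  (ha1 : a1 < a0) (ha2 : a2 <= a1) (hb1 : b1 < b0) (hb2 : b2 <= b1)
  (Ha : a0 ^+ 2 + a1 ^+ 2 + a2 ^+ 2 = 1) (Hb : b0 ^+ 2 + b1 ^+ 2 + b2 ^+ 2 = 1).

Ltac hyps := have ? := a00; have ? := a10; have ? := a20; have ? := b00;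
  have ? := b10; have ? := b20; have ? := hab0; have ? := ha0; have ? := ha1;
  have ? := ha2; have ? := hb1; have ? := hb2; have ? := Ha; have ? := Hb.

Lemma b0E : b0 = a0.
Proof. by apply/eqP; rewrite -(eqrXn2 (n:=2)) // hab0. Qed.

Lemma E2pure_Phi : E2pure ph = 1 - a0 ^+ 2.
Proof.
rewrite /E2pure; congr (1 - _).
have -> : a0 ^+ 2 = 1 / 2 * (cf a0 a1 a2 (val (ord0 : 'I_3)) ^+ 2 + cf b0 b1 b2 (val (ord0 : 'I_3)) ^+ 2).
  by rewrite /= -hab0; lra.
apply: (opnorm_diag (d := fun x : 'I_3 => 1 / 2 * (cf a0 a1 a2 (val x) ^+ 2 + cf b0 b1 b2 (val x) ^+ 2))).
  move=> x y; rewrite redXPhi_val.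
  case: x => [[|[|[|?]]] Hx] //; case: y => [[|[|[|?]]] Hy] //=;
    rewrite /sA /sB /=; congr (_%:C); ring.
have e1 : a1 ^+ 2 <= a0 ^+ 2 by rewrite ler_sqr // ltW.
have e2 : a2 ^+ 2 <= a1 ^+ 2 by rewrite ler_sqr.
have e3 : b1 ^+ 2 <= b0 ^+ 2 by rewrite ler_sqr // ltW.
have e4 : b2 ^+ 2 <= b1 ^+ 2 by rewrite ler_sqr.
have f1 := sqr_ge0 a0; have f2 := sqr_ge0 a1; have f3 := sqr_ge0 a2.
have f4 := sqr_ge0 b0; have f5 := sqr_ge0 b1; have f6 := sqr_ge0 b2.
case=> [[|[|[|?]]] Hx] //=; rewrite ?lexx ?andbT; try (apply/andP; split); lra.
Qed.


Lemma a0pos : 0 < a0.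
Proof. by apply: le_lt_trans ha1. Qed.
Lemma b0pos : 0 < b0.
Proof. by apply: le_lt_trans hb1. Qed.

Lemma trC_decomp_exists : exists s, pure_decomp (trC (proj ph)) s.
Proof.
apply: (decomp_exists (l := [:: (fun x : 'I_3 * 'I_4 => ph (x.1, (x.2, ord0)));
                               (fun x => ph (x.1, (x.2, lift ord0 ord0)))])).
- rewrite big_cons big_seq1 !sum_pairR !big_ord_recl !big_ord0.
  rewrite !Phi_val !cabs2_real /= /phr /sA /sB /= !exprMn t2; rewrite !expr0n /= !mulr0 !addr0 !add0r; hyps; lra.
- by move=> x y; rewrite /trC /proj big_cons big_seq1 !big_ord_recl big_ord0 addr0.
Qed.

Definition GG (al be : C) (i j : nat) : C := al * (sA i j)%:C + be * (sB i j)%:C.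
Definition blkG (al be : C) (i i' : nat) : C :=
  GG al be i 0 * (GG al be i' 0)^* + GG al be i 1 * (GG al be i' 1)^* +
  GG al be i 2 * (GG al be i' 2)^* + GG al be i 3 * (GG al be i' 3)^*.

Lemma E2pure_span (psi : 'I_3 * 'I_4 -> C) (al be : C) :
  (forall x, psi x = GG al be (val x.1) (val x.2)) ->
  cabs2 al + cabs2 be = 1 -> E2pure psi = 1 - a0 ^+ 2.
Proof.
move=> HG N; rewrite /E2pure; congr (1 - _).
have a0p := a0pos.
have e1 : a1 ^+ 2 <= a0 ^+ 2 by rewrite ler_sqr // ltW.
have e2 : a2 ^+ 2 <= a1 ^+ 2 by rewrite ler_sqr.
have f1 := sqr_ge0 a0; have f2 := sqr_ge0 a1; have f3 := sqr_ge0 a2.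
have HM : forall x y, redX psi x y = blkG al be (val x) (val y).
  by move=> x y; rewrite /redX !big_ord_recl big_ord0 !HG /bump /= addr0 !addrA.
clear HG; apply: (@opnorm_block _ (blkG al be) _ HM); clear HM psi.
- move: N; case: al => x1 y1; case: be => x2 y2.
  rewrite /blkG /GG /sA /sB /cabs2 /= b0E => N; csplit; last by ring.
  by rewrite -[in RHS](mulr1 (a0 ^+ 2)) -N; ring.
- by clear N; case: al => x1 y1; case: be => x2 y2; rewrite /blkG /GG /sA /sB /=; csplit; ring.
- by clear N; case: al => x1 y1; case: be => x2 y2; rewrite /blkG /GG /sA /sB /=; csplit; ring.
- by clear N; case: al => x1 y1; case: be => x2 y2; rewrite /blkG /GG /sA /sB /=; csplit; ring.
- by clear N; case: al => x1 y1; case: be => x2 y2; rewrite /blkG /GG /sA /sB /=; csplit; ring.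
- by [].
move: N; case: al => x1 y1; case: be => x2 y2.
rewrite /blkG /GG /sA /sB /cabs2 /= => N.
pose A := x1 ^+ 2 + y1 ^+ 2; pose B := x2 ^+ 2 + y2 ^+ 2.
pose p := A * a1 ^+ 2 + B * b1 ^+ 2; pose q := A * a2 ^+ 2 + B * b2 ^+ 2.
pose v := x1 * y2 - y1 * x2.
match goal with |- is_true (?L <= _) =>
  have HL : L = (p + q) ^+ 2 - 2 * (A * a1 * a2 - B * b1 * b2) ^+ 2
                 - 8 * (a1 * a2 * b1 * b2) * v ^+ 2 by rewrite /p /q /A /B /v; ring end.
rewrite HL.
have Hpq : p + q = 1 - a0 ^+ 2.
  have hA : 1 - a0 ^+ 2 = a1 ^+ 2 + a2 ^+ 2 by hyps; lra.
  have hB : 1 - a0 ^+ 2 = b1 ^+ 2 + b2 ^+ 2 by rewrite -b0E; hyps; lra.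
  have -> : p + q = A * (a1 ^+ 2 + a2 ^+ 2) + B * (b1 ^+ 2 + b2 ^+ 2) by rewrite /p /q; ring.
  by rewrite -hA -hB -mulrDl N mul1r.
rewrite Hpq.
have h8 : 0 <= 8 * (a1 * a2 * b1 * b2) * v ^+ 2.
  apply: mulr_ge0; last exact: sqr_ge0.
  apply: mulr_ge0; first by [].
  by apply: mulr_ge0; [apply: mulr_ge0; [apply: mulr_ge0|]|].
have h2 : 0 <= 2 * (A * a1 * a2 - B * b1 * b2) ^+ 2.
  by apply: mulr_ge0; [|exact: sqr_ge0].
have h1 : 0 <= 1 - a0 ^+ 2 by hyps; lra.
have h3 : 1 - a0 ^+ 2 <= a0 ^+ 2 by hyps; lra.
have h4 : (1 - a0 ^+ 2) ^+ 2 <= (a0 ^+ 2) ^+ 2 by rewrite ler_sqr // sqr_ge0.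
lra.
Qed.


Lemma lin_solve (c d y z : C) : d != 0 -> c * y + (- d) * z = 0 -> z = c * y / d.
Proof.
move=> hd /eqP; rewrite mulNr subr_eq0 => /eqP h.
by rewrite h mulrC mulrA mulVf ?mul1r.
Qed.

Lemma E2_AB : E2 (trC (proj ph)) = 1 - a0 ^+ 2.
Proof.
apply: E2_eq; first exact: trC_decomp_exists.
move=> s D k ks kp.
pose g i j := k.2 (inord i, inord j) : C.
have Hg : forall x : 'I_3 * 'I_4, k.2 x = g (val x.1) (val x.2).
  by case => i j; rewrite /g !inord_val.
have Z : forall i j, (i < 3)%N -> (j < 4)%N -> rAB i j i j = 0 -> g i j = 0.
  move=> i j hi hj h; apply: (decomp_zero_diag D ks kp).
  by rewrite trC_val /= !inordK // h.
have F : forall i j i' j' (c d : R), (i < 3)%N -> (j < 4)%N -> (i' < 3)%N -> (j' < 4)%N ->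
   c ^+ 2 * rAB i j i j + c * d * (rAB i j i' j' + rAB i' j' i j) +
   d ^+ 2 * rAB i' j' i' j' = 0 ->
   c%:C * g i j + d%:C * g i' j' = 0.
  move=> i j i' j' c d hi hj hi' hj' h; apply: (decomp_zero_form D ks kp).
  rewrite !trC_val /= !inordK // !conjR -!rmorphM -!rmorphD.
  by rewrite -[RHS](rmorph0 (real_complex R)) -h; congr (_%:C); ring.
have a0C : a0%:C != 0 :> C by rewrite (inj_eq (@complexI R)) gt_eqF // a0pos.
have b0C : b0%:C != 0 :> C by rewrite (inj_eq (@complexI R)) gt_eqF // b0pos.
pose al := g 0 0 / a0%:C; pose be := g 0 3 / b0%:C.
have Sh : forall i j, (i < 3)%N -> (j < 4)%N -> g i j = GG al be i j.
  move=> i j; rewrite /GG /sA /sB /al /be.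
  have RZ : forall i j, (i < 3)%N -> (j < 4)%N -> rAB i j i j = 0 -> g i j = 0 by [].
  case: i => [|[|[|i]]] //; case: j => [|[|[|[|j]]]] // _ _ /=; rewrite ?rmorph0 ?mulr0 ?addr0 ?add0r;
    try (by rewrite divfK);
    try (by apply: Z => //; rewrite /rAB /phr /sA /sB /=; ring).
  - have h := F 0 0 1 1 a1 (-a0) isT isT isT isT
      ltac:(rewrite /rAB /phr /sA /sB /=; ring).
    by rewrite rmorphN in h; rewrite (lin_solve a0C h); field.
  - have h := F 0 3 1 2 b1 (-b0) isT isT isT isT
      ltac:(rewrite /rAB /phr /sA /sB /=; ring).
    by rewrite rmorphN in h; rewrite (lin_solve b0C h); field.
  - have h := F 0 3 2 1 b2 (-b0) isT isT isT isT
      ltac:(rewrite /rAB /phr /sA /sB /=; ring).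
    by rewrite rmorphN in h; rewrite (lin_solve b0C h); field.
  - have h := F 0 0 2 2 a2 (-a0) isT isT isT isT
      ltac:(rewrite /rAB /phr /sA /sB /=; ring).
    by rewrite rmorphN in h; rewrite (lin_solve a0C h); field.
have HG : forall x, k.2 x = GG al be (val x.1) (val x.2).
  by move=> x; rewrite Hg Sh ?ltn_ord.
apply: (E2pure_span HG).
case: D => _ [_ [Hv _]]; move/vnorm1: (Hv k ks).
rewrite sum_pairR !big_ord_recl !big_ord0 !HG /GG /sA /sB /bump /=.
clear HG Sh; move: al be => [x1 y1] [x2 y2]; rewrite /cabs2 /=.
match goal with |- ?L = 1 -> _ =>
  have -> : L = (x1 ^+ 2 + y1 ^+ 2) * (a0 ^+ 2 + a1 ^+ 2 + a2 ^+ 2) +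
                (x2 ^+ 2 + y2 ^+ 2) * (b0 ^+ 2 + b1 ^+ 2 + b2 ^+ 2) by ring end.
by rewrite Ha Hb !mulr1.
Qed.


Definition formAC (i i' : nat) (c d : R) : R :=
  c ^+ 2 * rAC i 0 i 0 + d ^+ 2 * rAC i' 1 i' 1 + c * d * (rAC i 1 i' 0 + rAC i' 0 i 1).

Lemma notpsd_of i i' c d : (i < 3)%N -> (i' < 3)%N -> formAC i i' c d < 0 ->
  ~ psd (ptrans2 (trB (proj ph))).
Proof.
move=> hi hi' hF H.
have := psd_qform2 (inord i, inord 0) (inord i', inord 1) c%:C d%:C H.
rewrite /ptrans2 !trB_val /= !inordK // lecE /= => /andP [_].
rewrite /formAC in hF.
match goal with |- is_true (0 <= ?X) -> _ =>
  have -> : X = c ^+ 2 * rAC i 0 i 0 + d ^+ 2 * rAC i' 1 i' 1 +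
                c * d * (rAC i 1 i' 0 + rAC i' 0 i 1) by ring end.
lra.
Qed.

Lemma trB_decomp_exists : exists s, pure_decomp (trB (proj ph)) s.
Proof.
apply: (decomp_exists (l := [:: (fun x : 'I_3 * 'I_2 => ph (x.1, (ord0, x.2)));
    (fun x => ph (x.1, (lift ord0 ord0, x.2)));
    (fun x => ph (x.1, (lift ord0 (lift ord0 ord0), x.2)));
    (fun x => ph (x.1, (lift ord0 (lift ord0 (lift ord0 ord0)), x.2)))])).
- rewrite !big_cons big_nil !sum_pairR !big_ord_recl !big_ord0.
  rewrite !Phi_val !cabs2_real /= /phr /sA /sB /= !exprMn t2.
  rewrite !expr0n /= !mulr0 !addr0 !add0r; hyps; lra.
- move=> x y; rewrite /trB /proj !big_cons big_nil !big_ord_recl big_ord0.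
  by rewrite !addr0 !addrA.
Qed.


Lemma E2_AC_ge i i' c d : (i = 1%N /\ i' = 2%N) \/ (i = 2%N /\ i' = 1%N) ->
  0 < `|c * d| -> formAC i i' c d < 0 ->
  formAC i i' c d ^+ 2 / (4 * `|c * d| ^+ 2) <= E2 (trB (proj ph)).
Proof.
move=> hii u0 hF.
have hi : (i < 3)%N by case: hii => -[-> _].
have hi' : (i' < 3)%N by case: hii => -[_ ->].
apply: E2_ge; first exact: trB_decomp_exists.
move=> s D.
set u := `|c * d|.
set F := formAC i i' c d.
have hF' : F < 0 by [].
pose x1 : 'I_3 * 'I_2 := (inord i, inord 0); pose x2 : 'I_3 * 'I_2 := (inord i', inord 1).
pose y1 : 'I_3 * 'I_2 := (inord i, inord 1); pose y2 : 'I_3 * 'I_2 := (inord i', inord 0).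
pose t (k : R * ('I_3 * 'I_2 -> C)) := c ^+ 2 * cabs2 (k.2 x1) + d ^+ 2 * cabs2 (k.2 x2) +
      2 * (c * d) * complex.Re (k.2 y1 * (k.2 y2)^*).
pose n (k : R * ('I_3 * 'I_2 -> C)) := nc (k.2 x1 * k.2 x2 - k.2 y1 * k.2 y2).
have HT : \sum_(k <- s) k.1 * t k = F.
  apply: (@complexI R); have := decomp_lin x1 x2 y1 y2 c d D.
  rewrite -/(t _) => ->.
  rewrite !trB_val /= !inordK // /F /formAC; csplit; ring.
have [P0 [P1 [Pv _]]] := D.
have Hn : forall k, k \in s -> - (2 * u * n k) <= t k.
  by move=> k _; apply: pt_bound.
have HE : forall k, k \in s -> n k ^+ 2 <= E2pure k.2.
  move=> k ks; rewrite /n nc_sqr /x1 /x2 /y1 /y2; have := E2pure_32 (Pv k ks).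
  case: hii => -[-> ->] //.
  have -> : k.2 (inord 1, inord 0) * k.2 (inord 2, inord 1) -
            k.2 (inord 1, inord 1) * k.2 (inord 2, inord 0) =
            - (k.2 (inord 2, inord 0) * k.2 (inord 1, inord 1) -
               k.2 (inord 2, inord 1) * k.2 (inord 1, inord 0)) by ring.
  by rewrite cabs2N.
pose mu := \sum_(k <- s) k.1 * n k.
have mu0 : 0 <= mu by rewrite /mu big_seq; apply: sumr_ge0 => k ks; rewrite mulr_ge0 ?P0 ?nc_ge0.
have H1 : - F <= 2 * u * mu.
  rewrite -HT /mu mulr_sumr -sumrN big_seq [X in _ <= X]big_seq; apply: ler_sum => k ks.
  have := Hn k ks; have := P0 k ks => p0 hk.
  have := ler_wpM2l p0 hk; lra.
have H2 : mu ^+ 2 <= \sum_(k <- s) k.1 * E2pure k.2.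
  apply: le_trans (jensen n P0 P1) _.
  rewrite big_seq [X in _ <= X]big_seq; apply: ler_sum => k ks.
  by apply: ler_wpM2l; [apply: P0|apply: HE].
have H3 : F ^+ 2 <= (2 * u * mu) ^+ 2.
  have hm1 : 0 <= 2 * u * mu + F by lra.
  have hm2 : 0 <= 2 * u * mu - F by lra.
  have := mulr_ge0 hm1 hm2.
  have -> : (2 * u * mu + F) * (2 * u * mu - F) = (2 * u * mu) ^+ 2 - F ^+ 2 by ring.
  lra.
have u2 : 0 < 4 * u ^+ 2 by rewrite mulr_gt0 // exprn_gt0.
rewrite ler_pdivrMr //.
have : (2 * u * mu) ^+ 2 = 4 * u ^+ 2 * mu ^+ 2 by ring.
have := ler_wpM2l (ltW u2) H2.
nra.
Qed.


Hypothesis hne : b1 * a2 != a1 * b2.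

Lemma exists_neg : exists i i' c d, ((i = 1%N /\ i' = 2%N) \/ (i = 2%N /\ i' = 1%N)) /\
  0 < `|c * d| /\ formAC i i' c d < 0.
Proof.
have g1 : 0 <= b1 * a2 by apply: mulr_ge0.
have g2 : 0 <= a1 * b2 by apply: mulr_ge0.
case: (ltrgtP (b1 * a2) (a1 * b2)) => h; last by move: hne; rewrite h eqxx.
- have pb1 : 0 < b1.
    rewrite lt_def b10 andbT; apply/eqP => e; move: h; rewrite e mul0r.
    have -> : b2 = 0 by apply/eqP; rewrite eq_le b20 andbT -e.
    by rewrite mulr0 ltxx.
  exists 2%N, 1%N, (b1 ^+ 2), (- (a1 * b2)); split; first by right.
  split.
    rewrite normr_gt0 mulf_neq0 //; first by rewrite expf_neq0 // gt_eqF.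
    by rewrite oppr_eq0 gt_eqF // (le_lt_trans g1 h).
  have -> : formAC 2 1 (b1 ^+ 2) (- (a1 * b2)) =
            b1 ^+ 2 / 2 * ((b1 * a2) ^+ 2 - (a1 * b2) ^+ 2).
    by rewrite /formAC /rAC /phr /sA /sB /=; ring.
  rewrite pmulr_rlt0; last by rewrite divr_gt0 // exprn_gt0.
  by rewrite subr_lt0 ltr_sqr.
- have pa1 : 0 < a1.
    rewrite lt_def a10 andbT; apply/eqP => e; move: h; rewrite e mul0r.
    have -> : a2 = 0 by apply/eqP; rewrite eq_le a20 andbT -e.
    by rewrite mulr0 ltxx.
  exists 1%N, 2%N, (a2 * b1), (- (a1 ^+ 2)); split; first by left.
  split.
    rewrite normr_gt0 mulf_neq0 //; last by rewrite oppr_eq0 expf_neq0 // gt_eqF.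
    by rewrite mulrC gt_eqF // (le_lt_trans g2 h).
  have -> : formAC 1 2 (a2 * b1) (- (a1 ^+ 2)) =
            a1 ^+ 2 / 2 * ((a1 * b2) ^+ 2 - (b1 * a2) ^+ 2).
    by rewrite /formAC /rAC /phr /sA /sB /=; ring.
  rewrite pmulr_rlt0; last by rewrite divr_gt0 // exprn_gt0.
  by rewrite subr_lt0 ltr_sqr.
Qed.


Lemma AC_pos : 0 < E2 (trB (proj ph)).
Proof.
have [i [i' [c [d [hii [hu hF]]]]]] := exists_neg.
apply: lt_le_trans (E2_AC_ge hii hu hF).
have h1 : 0 < formAC i i' c d ^+ 2 by nra.
have h2 : 0 < 4 * `|c * d| ^+ 2 by rewrite mulr_gt0 // exprn_gt0.
by rewrite divr_gt0.
Qed.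

Lemma AC_npt : ~ psd (ptrans2 (trB (proj ph))).
Proof.
have [i [i' [c [d [hii [hu hF]]]]]] := exists_neg.
by case: hii => -[Hi Hi']; apply: (@notpsd_of i i' c d) => //; rewrite ?Hi ?Hi'.
Qed.

Lemma main_spec : E2pure ph = 1 - a0 ^+ 2 /\ E2 (trC (proj ph)) = 1 - a0 ^+ 2 /\
  0 < E2 (trB (proj ph)) /\ ~ psd (ptrans2 (trB (proj ph))).
Proof.
split; first exact: E2pure_Phi.
split; first exact: E2_AB.
split; [exact: AC_pos | exact: AC_npt].
Qed.

Lemma E2_ABC : E2 (proj ph) = 1 - a0 ^+ 2.
Proof.
rewrite (E2_proj (phi := ph) (x0 := (ord0, (ord0, ord0)))); first exact: E2pure_Phi.
  rewrite Phi_val /= /phr /sA /= (inj_eq (@complexI R)) mulf_neq0 //.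
    by rewrite invr_eq0 sqrtr_eq0 -ltNge ltr0n.
  by rewrite gt_eqF // a0pos.
exact: vnormPhi.
Qed.

End Spec.
End P.

End Helpers.
Import Helpers.

Theorem theorem1 (R : realType) :
  ~ monogamous (@E2m R) /\
  (forall a0 a1 a2 b0 b1 b2 : R,
    0 <= a0 -> 0 <= a1 -> 0 <= a2 -> 0 <= b0 -> 0 <= b1 -> 0 <= b2 ->
    a0 ^+ 2 = b0 ^+ 2 -> 1 / 2 <= a0 ^+ 2 ->
    a1 < a0 -> a2 <= a1 -> b1 < b0 -> b2 <= b1 ->
    a0 ^+ 2 + a1 ^+ 2 + a2 ^+ 2 = 1 -> b0 ^+ 2 + b1 ^+ 2 + b2 ^+ 2 = 1 ->
    b1 * a2 != a1 * b2 ->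
    let Phi := Phi a0 a1 a2 b0 b1 b2 in
    let rhoABC := proj Phi in
    E2pure Phi = 1 - a0 ^+ 2 /\
    E2 (trC rhoABC) = 1 - a0 ^+ 2 /\
    0 < E2 (trB rhoABC) /\
    ~ psd (ptrans2 (trB rhoABC))).
Proof.
split; last first.
  move=> a0 a1 a2 b0 b1 b2 h1 h2 h3 h4 h5 h6 h7 h8 h9 h10 h11 h12 h13 h14 h15.
  exact: main_spec.
move=> Hm.
pose a0 : R := 4 / 5; pose a1 : R := 3 / 5; pose a2 : R := 0.
pose b0 : R := 4 / 5; pose b1 : R := 12 / 25; pose b2 : R := 9 / 25.
have h1 : 0 <= a0 by rewrite /a0; lra.
have h2 : 0 <= a1 by rewrite /a1; lra.
have h3 : 0 <= a2 by rewrite /a2; lra.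
have h4 : 0 <= b0 by rewrite /b0; lra.
have h5 : 0 <= b1 by rewrite /b1; lra.
have h6 : 0 <= b2 by rewrite /b2; lra.
have h7 : a0 ^+ 2 = b0 ^+ 2 by [].
have h8 : 1 / 2 <= a0 ^+ 2 by rewrite /a0 expr2; lra.
have h9 : a1 < a0 by rewrite /a1 /a0; lra.
have h10 : a2 <= a1 by rewrite /a1 /a2; lra.
have h11 : b1 < b0 by rewrite /b1 /b0; lra.
have h12 : b2 <= b1 by rewrite /b1 /b2; lra.
have h13 : a0 ^+ 2 + a1 ^+ 2 + a2 ^+ 2 = 1 by rewrite /a0 /a1 /a2 !expr2; lra.
have h14 : b0 ^+ 2 + b1 ^+ 2 + b2 ^+ 2 = 1 by rewrite /b0 /b1 /b2 !expr2; lra.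
have h15 : b1 * a2 != a1 * b2.
  by rewrite /a2 /b1 /a1 /b2 mulr0; apply/eqP => h; lra.
have [_ [EAB [Hpos _]]] := main_spec h1 h2 h3 h4 h5 h6 h7 h8 h9 h10 h11 h12 h13 h14 h15.
have EABC := E2_ABC h1 h2 h3 h4 h5 h6 h7 h9 h10 h11 h12 h13 h14.
have Hd := density_proj (vnormPhi h13 h14).
have := Hm _ _ _ _ Hd; rewrite /E2m EABC EAB => /(_ erefl) H0.
by rewrite H0 ltxx in Hpos.
Qed.
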